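(* Let $u$ be a non-negative configuration on $K_{m,n}$ and suppose $u_{b_i}=0$ for some $b_i\in B_n$. Then there exists a proof $g$ for the rank of $u$ with $g_{b_i}>0$.
   Context: Let $m,n\ge 1$. $K_{m,n}$ is the complete bipartite graph with vertex set $V=A_m\sqcup B_n$, $A_m=\{a_1,\dots,a_m\}$, $B_n=\{b_1,\dots,b_n\}$, with exactly one edge $\{a_i,b_j\}$ for every $i,j$; $a_m$ is the sink. A configuration is a function $u:V\to\mathbb Z$; it is non-negative if all values are $\ge0$; $\mathrm{degree}(u)=\sum_c u_c$. For $c\in V$ with graph degree $d_c$, $\Delta^{(c)}=d_c e_c-\sum_{c'\text{ adjacent to }c}e_{c'}$, with $e_c$ the indicator configuration of $c$. Two configurations are toppling equivalent if their difference is an integer combination of the $\Delta^{(c)}$. A configuration is effective if toppling equivalent to a non-negative configuration. $\mathrm{rank}(u)=-1+\min\{\mathrm{degree}(f): f\ge 0,\ u-f\text{ not effective}\}$. A proof for the rank of $u$ is a non-negative $f$ with $u-f$ not effective and $\mathrm{degree}(f)=\mathrm{rank}(u)+1$. *)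

(* Defs.v *)
From mathcomp Require Import all_boot all_order all_algebra.
Set Implicit Arguments. Unset Strict Implicit. Unset Printing Implicit Defensive.
Import Order.TTheory GRing.Theory Num.Theory.
Local Open Scope ring_scope.

(* Vertex set V = A_m ⊔ B_n: inl i is a_{i+1}, inr j is b_{j+1}. *)
Definition Kvert (m n : nat) : finType := ('I_m + 'I_n)%type.

Definition Kadj (m n : nat) (x y : Kvert m n) : bool :=
  match x, y with
  | inl _, inr _ => true
  | inr _, inl _ => true
  | _, _ => false
  end.

Definition Kdeg (m n : nat) (c : Kvert m n) : nat := #|[pred c' | Kadj c c']|.

Definition config (m n : nat) := Kvert m n -> int.

Definition Delta (m n : nat) (c : Kvert m n) : config m n :=
  fun x => (if x == c then (Kdeg c)%:Z else 0) - (if Kadj c x then 1 else 0).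

Definition nonneg (m n : nat) (u : config m n) : Prop := forall x, 0 <= u x.

Definition degree (m n : nat) (u : config m n) : int := \sum_(x : Kvert m n) u x.

Definition csub (m n : nat) (u v : config m n) : config m n := fun x => u x - v x.

Definition toppling_equiv (m n : nat) (u v : config m n) : Prop :=
  exists z : Kvert m n -> int,
    forall x, u x - v x = \sum_(c : Kvert m n) z c * Delta c x.

Definition effective (m n : nat) (u : config m n) : Prop :=
  exists f : config m n, nonneg f /\ toppling_equiv u f.

Definition rank_is (m n : nat) (u : config m n) (r : int) : Prop :=
  (exists f : config m n, nonneg f /\ ~ effective (csub u f) /\ degree f = r + 1) /\
  (forall f : config m n, nonneg f -> ~ effective (csub u f) -> r + 1 <= degree f).

Definition rank_proof (m n : nat) (u g : config m n) : Prop :=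
  nonneg g /\ ~ effective (csub u g) /\
  exists r : int, rank_is u r /\ degree g = r + 1.

(* Main.v *)
Require Import Defs.
From mathcomp Require Import all_boot all_order all_algebra zify ring.
From Stdlib Require Import Classical.
Import Order.TTheory GRing.Theory Num.Theory.
Local Open Scope ring_scope.

Section Fl.
Variable d : int.
Hypothesis hd : 0 < d.
Lemma fl_le x : (x %/ d)%Z * d <= x.
Proof. by apply: lez_floor; rewrite gt_eqF. Qed.
Lemma fl_gt x : x < ((x %/ d)%Z + 1) * d.
Proof. exact: ltz_ceil. Qed.
Lemma fl_ub z x : z * d <= x -> z <= (x %/ d)%Z.
Proof. by rewrite lez_divRL. Qed.
Lemma fl_mono x y : x <= y -> (x %/ d)%Z <= (y %/ d)%Z.
Proof. move=> h; apply: fl_ub; exact: le_trans (fl_le x) h. Qed.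
Lemma fl_succ x : ((x + 1) %/ d)%Z <= (x %/ d)%Z + 1.
Proof.
have h1 := fl_le (x+1). have h2 := fl_gt x.
have : ((x + 1) %/ d)%Z * d <= ((x %/ d)%Z + 1) * d by lia.
by rewrite ler_pM2r.
Qed.
Lemma fl_jump x : (x %/ d)%Z < ((x + 1) %/ d)%Z -> x + 1 = ((x + 1) %/ d)%Z * d.
Proof.
move=> h. have h1 := fl_le (x+1). have h2 := fl_gt x.
have : ((x %/ d)%Z + 1) * d <= ((x + 1) %/ d)%Z * d by rewrite ler_pM2r //; lia.
lia.
Qed.
Lemma fl_shift k x : ((k * d + x) %/ d)%Z = k + (x %/ d)%Z.
Proof. by rewrite divzMDl // gt_eqF. Qed.
End Fl.

Section K.
Variables m n : nat.

Lemma Kdeg_l (i : 'I_m) : Kdeg (inl i : Kvert m n) = n.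
Proof.
rewrite /Kdeg -sum1_card big_sumType /=.
rewrite big_pred0 // add0n.
by rewrite sum1_card card_ord.
Qed.

Lemma Kdeg_r (j : 'I_n) : Kdeg (inr j : Kvert m n) = m.
Proof.
rewrite /Kdeg -sum1_card big_sumType /=.
rewrite [X in (_ + X)%N]big_pred0 // addn0.
by rewrite sum1_card card_ord.
Qed.

Definition Lz (z : Kvert m n -> int) (x : Kvert m n) : int :=
  \sum_(c : Kvert m n) z c * Delta c x.

Lemma LzE_l z (i : 'I_m) :
  Lz z (inl i) = n%:Z * z (inl i) - \sum_(j < n) z (inr j).
Proof.
rewrite /Lz big_sumType /= /Delta /=.
rewrite (eq_bigr (fun j => - z (inr j))); last by move=> j _; rewrite sub0r mulrN1.
rewrite sumrN; congr (_ - _).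
rewrite (bigD1 i) //= big1 ?addr0; last first.
  move=> k hk; rewrite (_ : (inl i == inl k :> Kvert m n) = false) ?subr0 ?mulr0 //.
  by apply/negbTE; apply: contra hk => /eqP [->].
by rewrite eqxx Kdeg_l ?subr0 mulrC.
Qed.

Lemma LzE_r z (j : 'I_n) :
  Lz z (inr j) = m%:Z * z (inr j) - \sum_(i < m) z (inl i).
Proof.
rewrite /Lz big_sumType /= /Delta /=.
rewrite (eq_bigr (fun i => - z (inl i))); last by move=> i _; rewrite sub0r mulrN1.
rewrite sumrN addrC; congr (_ - _).
rewrite (bigD1 j) //= big1 ?addr0; last first.
  move=> k hk; rewrite (_ : (inr j == inr k :> Kvert m n) = false) ?subr0 ?mulr0 //.
  by apply/negbTE; apply: contra hk => /eqP [->].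
by rewrite eqxx Kdeg_r ?subr0 mulrC.
Qed.

Definition Fs (D : config m n) (t : int) : int :=
  \sum_(i < m) ((D (inl i) + t) %/ n%:Z)%Z.
Definition Gs (D : config m n) (s : int) : int :=
  \sum_(j < n) ((D (inr j) + s) %/ m%:Z)%Z.

Lemma sum_if_eq (I : finType) (i0 : I) (c : int) :
  \sum_(i : I) (if i == i0 then c else 0) = c.
Proof. by rewrite -big_mkcond big_pred1_eq. Qed.

Lemma eff_char (hm : (0 < m)%N) (hn : (0 < n)%N) (D : config m n) :
  effective D <-> exists s t, s <= Fs D t /\ t <= Gs D s.
Proof.
have hn' : 0 < n%:Z by rewrite ltz_nat.
have hm' : 0 < m%:Z by rewrite ltz_nat.
split.
  move=> [f [hf [z hz]]].
  exists (\sum_(i < m) z (inl i)), (\sum_(j < n) z (inr j)); split.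
    apply: ler_sum => i _; apply: fl_ub => //.
    have := hz (inl i); rewrite -/(Lz z (inl i)) LzE_l => h.
    move: (hf (inl i)) h; rewrite mulrC; set S := (\sum_(j < n) _); set Z := z (inl i); set Y := D (inl i); set X := f (inl i); nia.
  apply: ler_sum => j _; apply: fl_ub => //.
  have := hz (inr j); rewrite -/(Lz z (inr j)) LzE_r => h.
  move: (hf (inr j)) h; rewrite mulrC; set S := (\sum_(i < m) _); set Z := z (inr j); set Y := D (inr j); set X := f (inr j); nia.
move=> [s [t [hs ht]]].
pose i0 : 'I_m := Ordinal hm.
pose j0 : 'I_n := Ordinal hn.
pose z : Kvert m n -> int := fun x => match x with
  | inl i => ((D (inl i) + t) %/ n%:Z)%Z - (if i == i0 then Fs D t - s else 0)
  | inr j => ((D (inr j) + s) %/ m%:Z)%Z - (if j == j0 then Gs D s - t else 0)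
  end.
have zA : \sum_(i < m) z (inl i) = s.
  by rewrite /z /= sumrB sum_if_eq /Fs opprB addrC subrK.
have zB : \sum_(j < n) z (inr j) = t.
  by rewrite /z /= sumrB sum_if_eq /Gs opprB addrC subrK.
exists (fun x => D x - Lz z x); split; last first.
  by exists z => x; rewrite /Lz; lia.
case=> [i|j].
  rewrite LzE_l zB /z.
  have h1 := @fl_le _ hn' (D (inl i) + t).
  have h2 : 0 <= (if i == i0 then Fs D t - s else 0) by case: ifP => _; lia.
  nia.
rewrite LzE_r zA /z.
have h1 := @fl_le _ hm' (D (inr j) + s).
have h2 : 0 <= (if j == j0 then Gs D s - t else 0) by case: ifP => _; lia.
nia.
Qed.

Lemma eq_ll (i k : 'I_m) : (inl i == inl k :> Kvert m n) = (i == k).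
Proof. by apply/eqP/eqP => [[]|->]. Qed.
Lemma eq_rr (i k : 'I_n) : (inr i == inr k :> Kvert m n) = (i == k).
Proof. by apply/eqP/eqP => [[]|->]. Qed.
Lemma eq_lr (i : 'I_m) (k : 'I_n) : (inl i == inr k :> Kvert m n) = false.
Proof. by apply/eqP. Qed.
Lemma eq_rl (i : 'I_n) (k : 'I_m) : (inr i == inl k :> Kvert m n) = false.
Proof. by apply/eqP. Qed.

Definition ind (c x : Kvert m n) : int := if x == c then 1 else 0.

Lemma Fs_upd (D D' : config m n) (a : 'I_m) t :
  (forall i, i != a -> D' (inl i) = D (inl i)) ->
  Fs D' t = Fs D t - ((D (inl a) + t) %/ n%:Z)%Z + ((D' (inl a) + t) %/ n%:Z)%Z.
Proof.
move=> h; rewrite /Fs (bigD1 a) //= [in RHS](bigD1 a) //=.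
rewrite (eq_bigr (fun i => ((D (inl i) + t) %/ n%:Z)%Z)); last first.
  by move=> i hi; rewrite h.
ring.
Qed.

Lemma Gs_upd (D D' : config m n) (w : 'I_n) s :
  (forall j, j != w -> D' (inr j) = D (inr j)) ->
  Gs D' s = Gs D s - ((D (inr w) + s) %/ m%:Z)%Z + ((D' (inr w) + s) %/ m%:Z)%Z.
Proof.
move=> h; rewrite /Gs (bigD1 w) //= [in RHS](bigD1 w) //=.
rewrite (eq_bigr (fun j => ((D (inr j) + s) %/ m%:Z)%Z)); last first.
  by move=> j hj; rewrite h.
ring.
Qed.

Lemma Fs_le (hn : (0 < n)%N) (D D' : config m n) t t' :
  (forall i, D (inl i) + t <= D' (inl i) + t') -> Fs D t <= Fs D' t'.
Proof.
move=> h; apply: ler_sum => i _; apply: fl_mono => //; by rewrite ltz_nat.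
Qed.

Lemma Gs_le (hm : (0 < m)%N) (D D' : config m n) s s' :
  (forall j, D (inr j) + s <= D' (inr j) + s') -> Gs D s <= Gs D' s'.
Proof.
move=> h; apply: ler_sum => j _; apply: fl_mono => //; by rewrite ltz_nat.
Qed.

Lemma Fs_per (hn : (0 < n)%N) (D : config m n) t k :
  Fs D (t + k * n%:Z) = Fs D t + k * m%:Z.
Proof.
have hn' : n%:Z != 0 by rewrite eqz_nat -lt0n.
rewrite /Fs (eq_bigr (fun i => k + ((D (inl i) + t) %/ n%:Z)%Z)); last first.
  move=> i _; have -> : D (inl i) + (t + k * n%:Z) = k * n%:Z + (D (inl i) + t) by ring.
  by rewrite divzMDl.
by rewrite big_split /= sumr_const card_ord -mulr_natr natz addrC.
Qed.

Lemma Gs_per (hm : (0 < m)%N) (D : config m n) s k :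
  Gs D (s + k * m%:Z) = Gs D s + k * n%:Z.
Proof.
have hm' : m%:Z != 0 by rewrite eqz_nat -lt0n.
rewrite /Gs (eq_bigr (fun j => k + ((D (inr j) + s) %/ m%:Z)%Z)); last first.
  move=> j _; have -> : D (inr j) + (s + k * m%:Z) = k * m%:Z + (D (inr j) + s) by ring.
  by rewrite divzMDl.
by rewrite big_split /= sumr_const card_ord -mulr_natr natz addrC.
Qed.

Lemma move_AB (hm : (0 < m)%N) (hn : (0 < n)%N) (D : config m n) (a : 'I_m) :
  ~ effective D -> effective (fun x => D x + ind (inl a) x) ->
  exists w : 'I_n, ~ effective (fun x => D x + ind (inl a) x - ind (inr w) x).
Proof.
move=> hD hDa.
set Da : config m n := (fun x => D x + ind (inl a) x).
have hn' : 0 < n%:Z by rewrite ltz_nat.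
have hm' : 0 < m%:Z by rewrite ltz_nat.
have nD : forall s t, s <= Fs D t -> t <= Gs D s -> False.
  by move=> s t h1 h2; apply: hD; apply/eff_char => //; exists s, t.
have GDa : forall s, Gs Da s = Gs D s.
  by move=> s; rewrite /Gs; apply: eq_bigr => j _; rewrite /Da /ind /= ?eq_rl addr0.
have FDa : forall t, Fs Da t =
    Fs D t - ((D (inl a) + t) %/ n%:Z)%Z + ((D (inl a) + t + 1) %/ n%:Z)%Z.
  move=> t; rewrite (@Fs_upd D Da a t); last first.
    by move=> i hi; rewrite /Da /ind /= eq_ll (negbTE hi) addr0.
  by rewrite /Da /ind /= eqxx [D (inl a) + 1 + t]addrAC.
have Fjump : forall t, Fs D t < Fs Da t -> exists c, D (inl a) + t + 1 = c * n%:Z.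
  move=> t; rewrite FDa => h; exists ((D (inl a) + t + 1) %/ n%:Z)%Z.
  apply: (@fl_jump _ hn'); lia.
have Fup : forall t, Fs Da t <= Fs D t + 1.
  by move=> t; rewrite FDa; have := @fl_succ _ hn' (D (inl a) + t); lia.
have Fmono1 : forall t, Fs Da t <= Fs D (t + 1).
  move=> t; apply: Fs_le => // i; rewrite /Da /ind.
  by case: ifP => _; lia.
move/eff_char: hDa => /(_ hm hn) [s0 [t0 [h1 h2]]]; rewrite -/Da GDa in h2; rewrite -/Da in h1.
have G0 : Gs D s0 = t0.
  have : ~ (t0 + 1 <= Gs D s0).
    by move=> h; apply: (nD s0 (t0 + 1)) => //; exact: le_trans h1 (Fmono1 t0).
  lia.
have F0 : Fs D t0 < s0.
  by rewrite ltNge; apply/negP => h; exact: nD _ _ h h2.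
have s0E : s0 = Fs D t0 + 1 by have := Fup t0; lia.
have [c0 hc0] := Fjump t0 (lt_le_trans F0 h1).
have Gm : Gs D (s0 - 1) < Gs D s0.
  rewrite ltNge; apply/negP => h; apply: (nD (s0 - 1) t0); lia.
have [w hw] : exists w : 'I_n,
    ((D (inr w) + s0 - 1) %/ m%:Z)%Z < ((D (inr w) + s0) %/ m%:Z)%Z.
  case: (boolP [exists w : 'I_n,
    ((D (inr w) + s0 - 1) %/ m%:Z)%Z < ((D (inr w) + s0) %/ m%:Z)%Z]).
    by move/existsP.
  move/existsPn => hno; exfalso; move: Gm; rewrite ltNge; apply/negP/negPn.
  rewrite /Gs; apply: ler_sum => j _; have := hno j; rewrite -leNgt addrA //.
exists w.
set D' : config m n := (fun x => D x + ind (inl a) x - ind (inr w) x).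
have GD' : forall s, Gs D' s =
    Gs D s - ((D (inr w) + s) %/ m%:Z)%Z + ((D (inr w) + s - 1) %/ m%:Z)%Z.
  move=> s; rewrite (@Gs_upd D D' w s); last first.
    by move=> j hj; rewrite /D' /ind /= ?eq_rl ?eq_rr (negbTE hj) addr0 subr0.
  by rewrite /D' /ind /= ?eq_rl eqxx addr0 [D (inr w) - 1 + s]addrAC.
have FD' : forall t, Fs D' t = Fs Da t.
  by move=> t; rewrite /Fs; apply: eq_bigr => i _; rewrite /D' /Da /ind /= ?eq_lr subr0.
have GD'le : forall s, Gs D' s <= Gs D s.
  move=> s; apply: Gs_le => // j; rewrite /D' /ind /=.
  by case: ifP => _; lia.
move/eff_char => /(_ hm hn) [s [t [hs ht]]]; rewrite FD' in hs.
have ht' : t <= Gs D s := le_trans ht (GD'le s).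
have Ft : Fs D t < s.
  by rewrite ltNge; apply/negP => h; exact: nD _ _ h ht'.
have sE : s = Fs D t + 1 by have := Fup t; lia.
have [c hc] := Fjump t (lt_le_trans Ft hs).
have tE : t = t0 + (c - c0) * n%:Z by nia.
rewrite tE Fs_per // in sE.
have sE' : s = s0 + (c - c0) * m%:Z by lia.
rewrite sE' Gs_per // GD' G0 in ht.
lia.
Qed.

Lemma eff_ext (D D' : config m n) : (forall x, D x = D' x) -> effective D -> effective D'.
Proof.
move=> h [f [hf [z hz]]]; exists f; split => //; exists z => x; by rewrite -h.
Qed.

Lemma degree_split (f : config m n) :
  degree f = \sum_(i < m) f (inl i) + \sum_(j < n) f (inr j).
Proof. by rewrite /degree big_sumType. Qed.

Lemma sum_Lz z : \sum_(x : Kvert m n) Lz z x = 0.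
Proof.
rewrite big_sumType /=.
rewrite (eq_bigr (fun i => n%:Z * z (inl i) - \sum_(j < n) z (inr j))); last by move=> i _; rewrite LzE_l.
rewrite [X in _ + X](eq_bigr (fun j => m%:Z * z (inr j) - \sum_(i < m) z (inl i))); last by move=> j _; rewrite LzE_r.
rewrite !sumrB -!mulr_sumr !sumr_const !card_ord.
set A := \sum_(i < m) z (inl i); set B := \sum_(j < n) z (inr j).
rewrite -[B *+ m]mulr_natr -[A *+ n]mulr_natr -!natz.
ring.
Qed.

Lemma eff_deg (D : config m n) : effective D -> 0 <= degree D.
Proof.
move=> [f [hf [z hz]]].
have -> : degree D = degree f + \sum_(x : Kvert m n) Lz z x.
  rewrite /degree -big_split /=; apply: eq_bigr => x _; rewrite /Lz -hz; ring.
by rewrite sum_Lz addr0 /degree sumr_ge0.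
Qed.

Lemma ind_sum (c : Kvert m n) : \sum_(x : Kvert m n) ind c x = 1.
Proof. exact: sum_if_eq. Qed.

Section Swap.
Variables w b0 : 'I_n.
Definition tp (j : 'I_n) : 'I_n := if j == w then b0 else if j == b0 then w else j.
Lemma tpK : involutive tp.
Proof.
move=> j; rewrite /tp.
case: (eqVneq j w) => [->|hjw].
  case: (eqVneq b0 w) => [->|h] //.
  by rewrite ?eqxx.
case: (eqVneq j b0) => [->|hjb].
  by rewrite ?eqxx.
by rewrite (negbTE hjw) (negbTE hjb).
Qed.
Definition sw (x : Kvert m n) : Kvert m n :=
  match x with inl i => inl i | inr j => inr (tp j) end.
Lemma swK : involutive sw.
Proof. by case=> [i|j] //=; rewrite tpK. Qed.

Lemma eff_sw (hm : (0 < m)%N) (hn : (0 < n)%N) (D : config m n) :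
  effective D -> effective (fun x => D (sw x)).
Proof.
move/eff_char => /(_ hm hn) [s [t [hs ht]]]; apply/eff_char => //; exists s, t.
split; first by [].
move: ht; rewrite /Gs (reindex_inj (inv_inj tpK)) /=.
by [].
Qed.

Lemma degree_sw (f : config m n) : degree (fun x => f (sw x)) = degree f.
Proof.
rewrite !degree_split /=; congr (_ + _).
rewrite (reindex_inj (inv_inj tpK)) /=.
by apply: eq_bigr => j _; rewrite tpK.
Qed.
End Swap.

Lemma degree_add_ind (f : config m n) c : degree (fun x => f x + ind c x) = degree f + 1.
Proof. by rewrite /degree big_split /= ind_sum. Qed.
Lemma degree_sub_ind (f : config m n) c : degree (fun x => f x - ind c x) = degree f - 1.
Proof. by rewrite /degree big_split /= sumrN ind_sum. Qed.

Definition isproof (u g : config m n) :=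
  nonneg g /\ ~ effective (csub u g) /\
  (forall h, nonneg h -> ~ effective (csub u h) -> degree g <= degree h).

Lemma wf_min (P : nat -> Prop) k : P k -> exists k0, P k0 /\ forall j, P j -> (k0 <= j)%N.
Proof.
elim: k {-2}k (leqnn k) => [|N IH] k hk hP.
  exists k; split => // j _; move: hk; rewrite leqn0 => /eqP ->; exact: leq0n.
case: (Classical_Prop.classic (exists j, (j < k)%N /\ P j)) => [[j [hj hPj]]|hno].
  apply: (IH j) => //; rewrite -ltnS; exact: leq_trans hj hk.
exists k; split => // j hPj; rewrite leqNgt; apply/negP => hjk; apply: hno; by exists j.
Qed.

Lemma deg_nonneg (f : config m n) : nonneg f -> 0 <= degree f.
Proof. by move=> hf; rewrite /degree sumr_ge0. Qed.

Lemma min_exists (u : config m n) (c : Kvert m n) : nonneg u -> exists g, isproof u g.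
Proof.
move=> hu.
pose P k := exists h, nonneg h /\ ~ effective (csub u h) /\ degree h = (k%:Z).
pose h0 : config m n := fun x => u x + ind c x.
have h0n : nonneg h0 by move=> x; have := hu x; rewrite /h0 /ind; case: ifP => _; lia.
have [k0 [[g [hg1 [hg2 hg3]]] hmin]] : exists k0, P k0 /\ forall j, P j -> (k0 <= j)%N.
  apply: (@wf_min P (absz (degree h0))).
  exists h0; split => //.
  split; last by rewrite abszE ger0_norm // deg_nonneg.
  move/eff_deg; rewrite (_ : degree _ = -1); first by [].
  rewrite /degree /csub /h0 (eq_bigr (fun x => - ind c x)); last by move=> x _; ring.
  by rewrite sumrN ind_sum.
exists g; split => //; split => // h hh1 hh2.
have : P (absz (degree h)) by exists h; split => //; split => //; rewrite abszE ger0_norm // deg_nonneg.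
move/hmin; rewrite hg3 -lez_nat => H; apply: (le_trans H).
by rewrite abszE ger0_norm // deg_nonneg.
Qed.

Lemma core (hm : (0 < m)%N) (hn : (0 < n)%N) (u : config m n) (hu : nonneg u)
  (b0 : 'I_n) (hub : u (inr b0) = 0)
  (IH : forall u' : config m n, nonneg u' -> degree u' < degree u ->
        forall b1, u' (inr b1) = 0 -> exists g, isproof u' g /\ 0 < g (inr b1)) :
  exists g, isproof u g /\ 0 < g (inr b0).
Proof.
have [f [hf1 [hf2 hf3]]] := @min_exists u (inr b0) hu.
have [x hx] : exists x, 0 < f x.
  case: (boolP [exists x, 0 < f x]); first by move/existsP.
  move/existsPn => hno; exfalso; apply: hf2.
  exists (csub u f); split; last by exists (fun _ => 0) => y; rewrite subrr big1 // => c _; rewrite mul0r.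
  move=> y; rewrite /csub; have := hno y; have := hf1 y; have := hu y; rewrite -leNgt; lia.
have [f1 [w [[g1 [g2 g3]] hw]]] : exists f1 (w : 'I_n), isproof u f1 /\ 0 < f1 (inr w).
  case: x hx => [a|w] hx; last by exists f, w.
  pose f' : config m n := fun y => f y - ind (inl a) y.
  have hf'n : nonneg f' by move=> y; have := hf1 y; rewrite /f' /ind; case: eqP => [->|_]; lia.
  have hf'e : effective (csub u f').
    apply: NNPP => hne; have := hf3 _ hf'n hne; rewrite /f' degree_sub_ind; lia.
  have hDa : effective (fun y => csub u f y + ind (inl a) y).
    by apply: eff_ext hf'e => y; rewrite /csub /f'; ring.
  have [w hw] := @move_AB hm hn (csub u f) a hf2 hDa.
  exists (fun y => f y - ind (inl a) y + ind (inr w) y), w; split; last first.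
    rewrite /ind /= ?eq_rl eqxx; have := hf1 (inr w). move=> h; rewrite subr0 -[0]addr0 ler_ltD // .
  split; first by move=> y; have := hf1 y; rewrite /ind; case: eqP => [->|_]; case: eqP => _; lia.
  split.
    by move=> he; apply: hw; apply: eff_ext he => y; rewrite /csub; ring.
  move=> h hh1 hh2; rewrite (degree_add_ind (fun y => f y - ind (inl a) y)) degree_sub_ind.
  have := hf3 _ hh1 hh2; lia.
case: (eqVneq w b0) => [<-|hwb]; first by exists f1.
have hw0 : 0 <= u (inr w) := hu (inr w).
case: (eqVneq (u (inr w)) 0) => [huw|huw].
  exists (fun y => f1 (sw w b0 y)); split; last by rewrite /= /tp eqxx eq_sym (negbTE hwb).
  have usw : forall y, u (sw w b0 y) = u y.
    case=> [i|j] //=; rewrite /tp.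
    case: (eqVneq j w) => [->|hjw]; first by rewrite hub huw.
    case: (eqVneq j b0) => [->|hjb] //; by rewrite hub huw.
  split; first by move=> y; exact: g1.
  split.
    move=> he; apply: g2; have := @eff_sw w b0 hm hn _ he.
    by apply: eff_ext => y; rewrite /csub /= swK usw.
  by move=> h hh1 hh2; rewrite degree_sw; exact: g3.
pose u' : config m n := fun y => u y - ind (inr w) y.
have hu'n : nonneg u'.
  move=> y; have := hu y; rewrite /u' /ind; case: eqP => [->|_]; lia.
have hu'b : u' (inr b0) = 0 by rewrite /u' /ind /= eq_rr eq_sym (negbTE hwb) subr0.
have hdu : degree u' < degree u by rewrite /u' degree_sub_ind; lia.
have [g' [[h1 [h2 h3]] hg'b]] := IH u' hu'n hdu b0 hu'b.
exists (fun y => g' y + ind (inr w) y); split; last first.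
  by rewrite /ind /= eq_rr eq_sym (negbTE hwb) addr0.
split; first by move=> y; have := h1 y; rewrite /ind; case: eqP => _; lia.
split.
  by move=> he; apply: h2; apply: eff_ext he => y; rewrite /csub /u'; ring.
move=> h hh1 hh2; rewrite degree_add_ind.
pose h'' : config m n := fun y => f1 y - ind (inr w) y.
have hh''n : nonneg h'' by move=> y; have := g1 y; rewrite /h'' /ind; case: eqP => [->|_]; lia.
have hh''e : ~ effective (csub u' h'').
  by move=> he; apply: g2; apply: eff_ext he => y; rewrite /csub /u' /h''; ring.
have := h3 _ hh''n hh''e; rewrite /h'' degree_sub_ind.
have := g3 _ hh1 hh2; lia.
Qed.

Lemma main_all (hm : (0 < m)%N) (hn : (0 < n)%N) N : forall (u : config m n), nonneg u ->
  (absz (degree u) <= N)%N -> forall b0, u (inr b0) = 0 ->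
  exists g, isproof u g /\ 0 < g (inr b0).
Proof.
elim: N => [|N IHN] u hu hN b0 hub; apply: core => // u' hu' hdeg b1 hub1.
  have := @deg_nonneg u' hu'; have := @deg_nonneg u hu.
  move: hN; rewrite leqn0 => /eqP hN.
  have : degree u = 0 by rewrite -[degree u]ger0_norm ?deg_nonneg // -abszE hN.
  lia.
apply: IHN => //.
have h1 := @deg_nonneg u' hu'; have h2 := @deg_nonneg u hu.
rewrite -lez_nat abszE ger0_norm //.
move: hN; rewrite -lez_nat abszE ger0_norm // => hN.
lia.
Qed.

End K.

Theorem lemma8p3 (m n : nat) (hm : (1 <= m)%N) (hn : (1 <= n)%N)
  (u : config m n) (hu : nonneg u) (i : 'I_n) (hui : u (inr i) = 0) :
  exists g : config m n, rank_proof u g /\ 0 < g (inr i).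
Proof.
have [g [[g1 [g2 g3]] hg]] := @main_all m n hm hn (absz (degree u)) u hu (leqnn _) i hui.
exists g; split => //; split => //; split => //.
exists (degree g - 1); split; last by rewrite subrK.
split; last by move=> f hf1 hf2; rewrite subrK; exact: g3.
by exists g; rewrite subrK.
Qed.
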